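(* For every integer $k\ge 12$ with $k\not\equiv 2\pmod 3$, put $p_4=9k^2+17k+17$ and $q_4=9k^2+8k+9$. Then $p_4/q_4=[[2]^k,2+k,9]$, $q_4^{-1}=k^2+2k+2$, $\gcd(p_4,30)=1$, and the type $T=\{(2,1),(3,2),(5,4),(p_4,q_4)\}$ satisfies $K^2(T)=\frac{3k^2+139k+154}{15(9k^2+17k+17)}$ and $0<K^2(T)<3e_{\mathrm{orb}}(T)=\frac1{10}+\frac{3}{p_4}$; however, $Q_{X(2,1)}\oplus Q_{X(3,2)}\oplus Q_{X(5,4)}\oplus Q_{X(p_4,q_4)}$ admits no lattice embedding into $-\mathbb{Z}^{k+10}$.
   Context: $[2]^k$ denotes $k$ consecutive entries equal to $2$ in a Hirzebruch–Jung continued fraction $[a_1,\dots,a_\ell]=a_1-1/(a_2-1/(\cdots-1/a_\ell))$ ($a_i\ge2$). $q_4^{-1}$ is the inverse of $q_4$ mod $p_4$ in $(0,p_4)$. For coprime $p>q>0$ with $p/q=[a_1,\dots,a_\ell]$, $Q_{X(p,q)}$ is $\mathbb{Z}^\ell$ with basis $v_1,\dots,v_\ell$, $v_i\cdot v_i=-a_i$, $v_i\cdot v_{i+1}=1$, other products $0$. $-\mathbb{Z}^N$ is $\mathbb{Z}^N$ with $e_i\cdot e_j=-\delta_{ij}$; lattice embeddings are injective form-preserving $\mathbb{Z}$-linear maps. For a type $T=\{(p_i,q_i)\}_{i=1}^4$ write $p_i/(p_i-q_i)=[n_{i,1},\dots,n_{i,\ell_i}]$, $L=\sum\ell_i$;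 $K^2(T)=9-3L+\sum_{i,j}n_{i,j}-\sum_i\frac{q_i+q_i^{-1}-2}{p_i}$, $e_{\mathrm{orb}}(T)=3-\sum_i(1-1/p_i)$. *)

(* Defs.v *)
From mathcomp Require Import all_boot all_order all_algebra.
Set Implicit Arguments. Unset Strict Implicit. Unset Printing Implicit Defensive.
Import Order.TTheory GRing.Theory Num.Theory.
Local Open Scope ring_scope.

Fixpoint hjval (s : seq nat) : rat :=
  match s with
  | [::] => 0
  | [:: a] => a%:R
  | a :: s' => a%:R - (hjval s')^-1
  end.

(* The HJ expansion of p/q (coprime p > q > 0): a_1 = ceil(p/q), and then
   the expansion of q/(a_1 q - p).  [f] is fuel (q strictly decreases). *)
Fixpoint hjexp_rec (f p q : nat) : seq nat :=
  if f is f'.+1 then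
    if q is 0 then [::] else
    let a := ((p + q.-1) %/ q)%N in
    if (a * q == p)%N then [:: a] else a :: hjexp_rec f' q (a * q - p)
  else [::].

Definition hjexp (p q : nat) : seq nat := hjexp_rec q.+1 p q.

Definition qinv (p q : nat) : nat :=
  nth 0%N [seq x <- iota 1 p.-1 | (q * x %% p == 1 %% p)%N] 0%N.

Definition Ltot (T : seq (nat * nat)) : nat :=
  sumn [seq size (hjexp t.1 (t.1 - t.2)) | t <- T].

Definition K2 (T : seq (nat * nat)) : rat :=
  9 - 3 * (Ltot T)%:R
  + (sumn (flatten [seq hjexp t.1 (t.1 - t.2) | t <- T]))%:R
  - \sum_(t <- T) (((t.2 + qinv t.1 t.2)%:R - 2) / t.1%:R).

Definition eorb (T : seq (nat * nat)) : rat :=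
  3 - \sum_(t <- T) (1 - (t.1%:R)^-1).

(* Intersection lattice of the orthogonal direct sum of the linear chains
   Q_{X(p_i,q_i)}, with respect to the concatenated basis. *)
Definition chains (T : seq (nat * nat)) : seq (seq nat) :=
  [seq hjexp t.1 t.2 | t <- T].

Definition chain_ids (cs : seq (seq nat)) : seq nat :=
  flatten [seq nseq (size (nth [::] cs i)) i | i <- iota 0 (size cs)].

Definition gram_sum (cs : seq (seq nat)) : 'M[int]_(size (flatten cs)) :=
  \matrix_(i, j)
    if i == j then - ((nth 0%N (flatten cs) i)%:Z)
    else if (((i.+1 == j) || (j.+1 == i)) &&
             (nth 0%N (chain_ids cs) i == nth 0%N (chain_ids cs) j))%N
         then 1 else 0.

(* A lattice embedding of (Z^n, G) into -Z^N: an injective Z-linear map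
   x |-> x *m A with (xA).(yA)_{-Z^N} = - (xA)(yA)^T = x G y^T. *)
Definition embeds_into_negZ (n : nat) (G : 'M[int]_n) (N : nat) : Prop :=
  exists A : 'M[int]_(n, N),
    (forall x : 'rV[int]_n, x *m A = 0 -> x = 0) /\ A *m A^T = - G.

(* Main.v *)
Require Import Defs.
From mathcomp Require Import all_boot all_order all_algebra.
From mathcomp Require Import zify ring lra.
Import Order.TTheory GRing.Theory Num.Theory.
Set Implicit Arguments. Unset Strict Implicit. Unset Printing Implicit Defensive.


Lemma hj_step f p q a r : 0 < q -> r < q -> p + q.-1 = a * q + r ->
  hjexp_rec f.+1 p q = if a * q == p then [:: a] else a :: hjexp_rec f q (a * q - p).
Proof.
case: q => [//|q] _ rq E /=.
by rewrite E divnMDl // divn_small // addn0.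
Qed.

Lemma hj_twos f n d s : 0 < d -> 0 < s ->
  hjexp_rec (f + n) (n * d + s + d) (n * d + s) = nseq n 2 ++ hjexp_rec f (s + d) s.
Proof.
move=> d0 s0; elim: n => [|n IH] /=; first by rewrite addn0 mul0n add0n.
rewrite addnS (@hj_step _ _ _ 2 (d.-1)); [|lia|lia|lia].
have -> : (2 * (n.+1 * d + s) == n.+1 * d + s + d) = false by lia.
rewrite (_ : 2 * (n.+1 * d + s) - (n.+1 * d + s + d) = n * d + s); last by lia.
by rewrite (_ : n.+1 * d + s = n * d + s + d) ?IH //; lia.
Qed.

Lemma hj_main k : 12 <= k ->
  hjexp (9 * k ^ 2 + 17 * k + 17) (9 * k ^ 2 + 8 * k + 9) = nseq k 2 ++ [:: k + 2; 9].
Proof.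
move=> k12; rewrite /hjexp.
rewrite (_ : (9 * k ^ 2 + 8 * k + 9).+1 = (9 * k ^ 2 + 7 * k + 8).+2 + k); last by lia.
rewrite (_ : 9 * k ^ 2 + 17 * k + 17 = k * (9 * k + 8) + 9 + (9 * k + 8)); last by ring.
rewrite (_ : 9 * k ^ 2 + 8 * k + 9 = k * (9 * k + 8) + 9); last by ring.
rewrite hj_twos //; last lia. f_equal.
rewrite (@hj_step _ _ _ (k + 2) 7); [|lia|lia|lia].
have -> : ((k + 2) * 9 == 9 + (9 * k + 8)) = false by lia.
by rewrite (_ : (k + 2) * 9 - (9 + (9 * k + 8)) = 1); last by lia.
Qed.

Lemma hj_dual k : 12 <= k ->
  hjexp (9 * k ^ 2 + 17 * k + 17) (9 * k ^ 2 + 17 * k + 17 - (9 * k ^ 2 + 8 * k + 9))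
  = [:: k + 2] ++ nseq (k - 1) 2 ++ [:: 3] ++ nseq 6 2 ++ [:: 2].
Proof.
move=> k12; rewrite /hjexp.
rewrite (_ : 9 * k ^ 2 + 17 * k + 17 - (9 * k ^ 2 + 8 * k + 9) = 9 * k + 8); last by lia.
rewrite (@hj_step _ _ _ (k + 2) 8); [|lia|lia|nia].
have -> : ((k + 2) * (9 * k + 8) == 9 * k ^ 2 + 17 * k + 17) = false by nia.
rewrite (_ : (k + 2) * (9 * k + 8) - (9 * k ^ 2 + 17 * k + 17) = (k - 1) * 9 + 8);
  last by nia.
rewrite {2}(_ : 9 * k + 8 = (k - 1) * 9 + 8 + 9); last by lia.
rewrite {1}(_ : 9 * k + 8 = (8 * k + 2 + 6).+1 + (k - 1)); last by lia.
rewrite hj_twos //=.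
rewrite (_ : (8 + 9 + 7) %/ 8 = 3) // (_ : 3 * 8 - (8 + 9) = 6 * 1 + 1) //.
rewrite (_ : 8 = 6 * 1 + 1 + 1) // hj_twos //.
by rewrite (_ : 8 * k + 2 = (8 * k + 1).+1) //; lia.
Qed.

Lemma qinv_unique p q x0 : 1 < p -> 0 < x0 < p -> (q * x0) %% p = 1 ->
  qinv p q = x0.
Proof.
move=> p1 /andP[x00 x0p] Hx; rewrite /qinv.
have uniq_x : forall x, x \in iota 1 p.-1 -> (q * x) %% p == 1 %% p -> x = x0.
  move=> x; rewrite mem_iota => /andP[x1 xp] /eqP Hq.
  have xp' : x < p by lia.
  rewrite (modn_small p1) in Hq.
  rewrite -(modn_small xp') -(modn_small x0p).
  rewrite -[x in x %% p = _]muln1 -Hx modnMmr mulnA [x * q]mulnC.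
  by rewrite -modnMml Hq mul1n.
have inx0 : x0 \in [seq x <- iota 1 p.-1 | (q * x) %% p == 1 %% p].
  by rewrite mem_filter mem_iota Hx modn_small // eqxx /=; lia.
move: inx0; case E: [seq x <- iota 1 p.-1 | _] => [//|y s] _.
have : y \in [seq x <- iota 1 p.-1 | (q * x) %% p == 1 %% p] by rewrite E inE eqxx.
by rewrite mem_filter => /andP[h1 h2] /=; apply: uniq_x.
Qed.

Lemma qinv_main k : 12 <= k ->
  qinv (9 * k ^ 2 + 17 * k + 17) (9 * k ^ 2 + 8 * k + 9) = k ^ 2 + 2 * k + 2.
Proof.
move=> k12; apply: qinv_unique; [lia| |].
  apply/andP; split; nia.
rewrite (_ : (9 * k ^ 2 + 8 * k + 9) * (k ^ 2 + 2 * k + 2) =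
   (k ^ 2 + k + 1) * (9 * k ^ 2 + 17 * k + 17) + 1); last by ring.
by rewrite modnMDl modn_small //; nia.
Qed.

Lemma gcd_main k : 12 <= k -> k %% 3 != 2 -> gcdn (9 * k ^ 2 + 17 * k + 17) 30 = 1.
Proof.
move=> k12 k3.
have Hall : all (fun r => (r %% 3 != 2) ==> (gcdn (9 * r ^ 2 + 17 * r + 17) 30 == 1))
   (iota 0 30) by [].
set r := k %% 30; set q := k %/ 30.
have kE : k = q * 30 + r by rewrite /q /r -divn_eq.
have r30 : r < 30 by rewrite /r ltn_pmod.
have r3 : r %% 3 = k %% 3.
  by rewrite kE (_ : q * 30 = (q * 10) * 3) ?modnMDl // -mulnA.
have := allP Hall r; rewrite mem_iota add0n r30 => /(_ isT).
rewrite r3 k3 /= => /eqP Hg; rewrite -[RHS]Hg.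
rewrite -[LHS]gcdn_modl -[RHS]gcdn_modl; congr gcdn.
rewrite kE (_ : 9 * (q * 30 + r) ^ 2 + 17 * (q * 30 + r) + 17 =
   (270 * q ^ 2 + 18 * q * r + 17 * q) * 30 + (9 * r ^ 2 + 17 * r + 17)); last by ring.
by rewrite modnMDl.
Qed.

Definition cidf (i : nat) : nat := (0 < i) + (2 < i) + (6 < i).
Definition adjL (i j : nat) : bool := ((i.+1 == j) || (j.+1 == i)) && (cidf i == cidf j).

Lemma adjL_sym i j : adjL i j = adjL j i.
Proof. by rewrite /adjL orbC; congr (_ && _); exact: eq_sym. Qed.

Lemma adjE1 x j : x.+1 != j -> j.+1 != x -> adjL x j = false.
Proof. by move=> h1 h2; rewrite /adjL (negbTE h1) (negbTE h2). Qed.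

Lemma adjE2 i : adjL i i.+1 = [&& i != 0, i != 2 & i != 6].
Proof. by rewrite /adjL eqxx /= /cidf; case: i => [|[|[|[|[|[|[|i]]]]]]]. Qed.

Lemma adjE3 i : adjL i.+1 i = [&& i != 0, i != 2 & i != 6].
Proof. by rewrite adjL_sym adjE2. Qed.

Lemma notwins_L k i j : 12 <= k -> i < k + 7 -> j < k + 7 -> i != j -> ~~ adjL i j ->
  exists x, [&& x < k + 7, x != i, x != j & adjL x i != adjL x j].
Proof.
move=> k12.
wlog ij : i j / i < j.
  move=> W im jm nij na; case: (ltngtP i j) => [h|h|h]; first exact: W.
    have e1 : j != i by rewrite eq_sym.
    have e2 : ~~ adjL j i by rewrite adjL_sym.
    have [x /and4P[a b c d]] := W j i h jm im e1 e2.
    by exists x; rewrite a b c eq_sym.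
  by rewrite h eqxx in nij.
move=> im jm _ na.
case: i ij im na => [|i'] ij im na.
  case: j ij jm na => [//|j'] _ jm na.
  have [j1|j1] := eqVneq j' 1.
    subst j'; exists 1; rewrite adjE3 adjE2 /=; lia.
  have [h|h] := boolP ((j' == 5) || (j' == k + 5)).
    exists j'; apply/and4P; split; [lia|lia|lia|].
    rewrite adjE2 adjE1; lia.
  exists j'.+2; apply/and4P; split; [lia|lia|lia|].
  rewrite adjE3 adjE1; lia.
have [h|h] := boolP [&& i' != 0, i' != 2 & i' != 6].
  exists i'; apply/and4P; split; [lia|lia|lia|].
  rewrite adjE2 h (adjE1 (x:=i') (j:=j)); lia.
have [h'|h'] := boolP [&& j != 2, j != 6 & j != k + 6].
  exists j.+1; apply/and4P; split; [lia|lia|lia|].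
  rewrite adjE3 (adjE1 (x:=j.+1) (j:=i'.+1)); lia.
have [e|ne] := eqVneq i' 0.
  subst i'; have [e|ne] := eqVneq j 2.
    by subst j; rewrite adjE2 in na.
  exists 2; apply/and4P; split; [lia|lia|lia|].
  rewrite adjE3 adjE1 /=; lia.
exists i'.+2; apply/and4P; split; [lia|lia|lia|].
rewrite adjE3 (adjE1 (x:=i'.+2) (j:=j)); lia.
Qed.

Definition ellf (k i : nat) : nat :=
  (i == 0) + (i == 0) + (i == 1) + (i == 2) + (i == 3) + (i == 6) + (i == 7) + (i == k + 6).

Lemma sum_ind1 m j : j < m -> \sum_(i < m) (i == j :> nat) = 1.
Proof.
elim: m => [//|m IH] jm; rewrite big_ord_recr /=.
have [e|ne] := eqVneq m j.
  subst j; rewrite big1 // => i _; by rewrite (ltn_eqF (ltn_ord i)).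
by rewrite IH ?addn0 //; move: jm ne; rewrite ltnS leq_eqVlt eq_sym => /orP[->|].
Qed.

Lemma ell_sum k : 12 <= k -> \sum_(i < k + 7) ellf k i = 8.
Proof.
move=> k12; rewrite /ellf !big_split /= !sum_ind1 //; lia.
Qed.

Lemma ellhyp_L k (i : nat) : 12 <= k -> i < k + 7 ->
  ellf k i = 0 \/
    (ellf k i = 1 /\ exists u, [/\ u < k + 7, adjL u i &
        forall x, x < k + 7 -> adjL x i -> x = u]) \/
    (ellf k i = 2 /\ forall x, x < k + 7 -> ~~ adjL x i).
Proof.
move=> k12 im; rewrite /ellf /adjL /cidf.
have [->|i0] := eqVneq i 0.
  by right; right; split; [lia| move=> x xm; lia].
have [h|h] := boolP ((i == 1) || (i == 3) || (i == 7)).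
  right; left; split; first by lia.
  exists i.+1; split; [lia|lia|move=> x xm; lia].
have [h'|h'] := boolP ((i == 2) || (i == 6) || (i == k + 6)).
  right; left; split; first by lia.
  exists i.-1; split; [lia|lia|move=> x xm; lia].
by left; lia.
Qed.

Lemma ids_nth k i : i < k + 9 ->
  nth 0 ([:: 0; 1; 1; 2; 2; 2; 2] ++ nseq (k + 2) 3) i = cidf i.
Proof.
move=> ik; case: (ltnP i 7) => hi.
  by case: i hi {ik} => [|[|[|[|[|[|[|i]]]]]]].
rewrite nth_cat /= ltnNge hi /= nth_nseq; rewrite /cidf; case: ifP; lia.
Qed.

Lemma flat_nth k i : i < k + 7 ->
  nth 0 (nseq (k + 7) 2 ++ [:: k + 2; 9]) i = 2.
Proof. by move=> ik; rewrite nth_cat size_nseq ik nth_nseq ik. Qed.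
Local Open Scope ring_scope.

Definition dotv (N : nat) (x y : 'I_N -> int) : int := \sum_(c < N) x c * y c.

Definition pm1 (z : int) := z = 1 \/ z = -1.

Lemma dot2 N (x v : 'I_N -> int) (a b : 'I_N) : a != b ->
  (forall c, c != a -> c != b -> v c = 0) -> dotv x v = x a * v a + x b * v b.
Proof.
move=> ab H; rewrite /dotv (bigD1 a) //= (bigD1 b) /=; last by rewrite eq_sym.
by rewrite big1 ?addr0 // => c /andP[ca cb]; rewrite H ?mulr0.
Qed.

Lemma sum_bool_card (T : finType) (P : pred T) :
  (\sum_(c : T) (P c : nat))%N = #|P|.
Proof.
rewrite -sum1_card [RHS]big_mkcond /=; apply: eq_bigr => c _.
by rewrite unfold_in; case: (P c).
Qed.

Lemma norm2_shape N (v : 'I_N -> int) : dotv v v = 2 ->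
  exists a b, [/\ a != b, pm1 (v a), pm1 (v b) &
     forall c, c != a -> c != b -> v c = 0].
Proof.
move=> H.
have Hle : forall c, v c * v c <= 2.
  move=> c; rewrite -H /dotv (bigD1 c) //= lerDl.
  by apply: sumr_ge0 => e _; rewrite -expr2 sqr_ge0.
have H01 : forall c, (v c * v c = (v c != 0)%:R).
  move=> c; have := Hle c; case: eqP => [->|/eqP nz] /=; first by rewrite mulr0.
  move=> h; have : (v c = 1 \/ v c = -1) by move: nz; nia.
  by case=> ->.
have Hc : #|[set c | v c != 0]| = 2%N.
  apply/eqP; rewrite -(eqr_nat int) -H /dotv (eq_bigr _ (fun c _ => H01 c)).
  rewrite -natr_sum cardsE sum_bool_card //.
have [a [b [ab E]]] := cards2P _ (introT eqP Hc).
have inab : forall c, (v c != 0) = (c \in [set a; b]) by move=> c; rewrite -E inE.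
have pm : forall c, v c != 0 -> pm1 (v c).
  move=> c nz; have := Hle c; move: nz; rewrite /pm1; nia.
exists a, b; split => //.
- by apply: pm; rewrite inab !inE eqxx.
- by apply: pm; rewrite inab !inE eqxx orbT.
- move=> c ca cb; apply/eqP; rewrite -[_ == 0]negbK inab !inE.
  by rewrite (negbTE ca) (negbTE cb).
Qed.

Lemma norm2_at N (v : 'I_N -> int) c : dotv v v = 2 -> v c != 0 ->
  exists c', [/\ c' != c, pm1 (v c), pm1 (v c') &
     forall e, e != c -> e != c' -> v e = 0].
Proof.
move=> /norm2_shape [a [b [ab pa pb H]]] nz.
have [ca|nca] := eqVneq c a.
  subst c; exists b; split => //; by rewrite eq_sym.
have [cb|ncb] := eqVneq c b.
  subst c; exists a; split => // e eb ea; exact: H.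
by move: nz; rewrite H ?eqxx.
Qed.

Definition Hyps (N m : nat) (r : nat -> 'I_N -> int) (adj : nat -> nat -> bool) :=
  [/\ (forall i, (i < m)%N -> dotv (r i) (r i) = 2),
      (forall i j, (i < m)%N -> (j < m)%N -> i != j ->
          dotv (r i) (r j) = if adj i j then -1 else 0),
      (forall i j, adj i j = adj j i),
      (forall i, ~~ adj i i) &
      (forall i j, (i < m)%N -> (j < m)%N -> i != j -> ~~ adj i j ->
          exists x, [&& (x < m)%N, x != i, x != j & adj x i != adj x j])].

Lemma pm1_cases (z : int) : pm1 z -> z = 1 \/ z = -1. Proof. by []. Qed.

Lemma twins N m r adj i j (a b : 'I_N) : Hyps m r adj ->
  (i < m)%N -> (j < m)%N -> i != j -> a != b ->
  pm1 (r i a) -> pm1 (r i b) -> pm1 (r j a) -> pm1 (r j b) ->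
  (forall c, c != a -> c != b -> r i c = 0) ->
  (forall c, c != a -> c != b -> r j c = 0) -> False.
Proof.
move=> [Hn Hd Hs Hirr Htw] im jm ij ab pia pib pja pjb Si Sj.
have Dij := Hd _ _ im jm ij; rewrite (dot2 _ ab Sj) in Dij.
have nadj : ~~ adj i j.
  apply/negP => aij; rewrite aij in Dij.
  by move: Dij; case: pia => ->; case: pib => ->; case: pja => ->; case: pjb => ->; lia.
have [x /and4P[xm xi xj hx]] := Htw _ _ im jm ij nadj.
have Dxi := Hd _ _ xm im xi; have Dxj := Hd _ _ xm jm xj.
rewrite (dot2 _ ab Si) in Dxi; rewrite (dot2 _ ab Sj) in Dxj.
move: hx Dxi Dxj; case: (adj x i); case: (adj x j) => // _.
  by case: pia => ->; case: pib => ->; case: pja => ->; case: pjb => ->; lia.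
by case: pia => ->; case: pib => ->; case: pja => ->; case: pjb => ->; lia.
Qed.

Lemma share N m r adj i j (c : 'I_N) : Hyps m r adj ->
  (i < m)%N -> (j < m)%N -> i != j -> r i c != 0 -> r j c != 0 ->
  adj i j /\ r i c * r j c = -1.
Proof.
move=> H im jm ij nzi nzj; have H' := H; case: H' => [Hn Hd Hs Hirr Htw].
have [c1 [c1c pic pic1 Si]] := norm2_at (Hn _ im) nzi.
have [c2 [c2c pjc pjc2 Sj]] := norm2_at (Hn _ jm) nzj.
have [e12|n12] := eqVneq c1 c2.
  subst c2; exfalso; apply: (twins H im jm ij _ pic pic1 pjc pjc2 Si Sj).
  by rewrite eq_sym.
have Dij := Hd _ _ im jm ij; rewrite (@dot2 _ (r i) (r j) c c2 _ Sj) in Dij; last by rewrite eq_sym.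
rewrite (Si c2) // in Dij; last by rewrite eq_sym.
move: Dij; case: (adj i j) => Dij; split => //; move: Dij;
  by case: pic => ->; case: pjc => ->; lia.
Qed.

Definition dcount N m (r : nat -> 'I_N -> int) (c : 'I_N) : nat :=
  (\sum_(i < m) (r i c != 0))%N.

Lemma sum_le1 m (P : 'I_m -> bool) :
  (forall i j, P i -> P j -> i = j) -> (\sum_(i < m) P i <= 1)%N.
Proof.
move=> H; have [i Pi|] := pickP P.
  rewrite (bigD1 i) //= big1 ?Pi // => j ji.
  by case Pj: (P j) => //; move: ji; rewrite (H _ _ Pj Pi) eqxx.
by move=> nP; rewrite big1 // => i _; rewrite nP.
Qed.

Lemma pm1_or0 N m r adj (i : nat) (c : 'I_N) : Hyps m r adj -> (i < m)%N ->
  r i c = 0 \/ pm1 (r i c).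
Proof.
move=> [Hn _ _ _ _] im; have [->|nz] := eqVneq (r i c) 0; first by left.
by right; have [? [_ p _ _]] := norm2_at (Hn _ im) nz.
Qed.

Lemma dcount_le2 N m r adj (c : 'I_N) : Hyps m r adj -> (dcount m r c <= 2)%N.
Proof.
move=> H; rewrite /dcount.
have -> : (\sum_(i < m) (r i c != 0) =
   \sum_(i < m) (r i c == 1%R) + \sum_(i < m) (r i c == -1%R))%N.
  rewrite -big_split /=; apply: eq_bigr => i _.
  by case: (pm1_or0 c H (ltn_ord i)) => [->|[]->].
have L : forall s : int, s * s = 1 -> (forall i j : 'I_m, r i c == s -> r j c == s -> i = j).
  move=> s ss i j /eqP ei /eqP ej; apply: val_inj => /=.
  apply/eqP; apply: contraT => ij.
  have sn : s != 0 by apply/eqP => s0; move: ss; rewrite s0 mulr0.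
  have := @share N m r adj i j c H (ltn_ord i) (ltn_ord j) ij.
  by rewrite ei ej sn ss => /(_ isT isT) [_]; lia.
rewrite -[2%N]/(1 + 1)%N; apply: leq_add; apply: sum_le1; apply: L => //.
Qed.

Lemma leaf N m r adj (i : nat) (c : 'I_N) : Hyps m r adj -> (i < m)%N ->
  r i c != 0 -> (forall u, (u < m)%N -> adj u i -> r u c = 0) -> dcount m r c = 1%N.
Proof.
move=> H im nz Hu; rewrite /dcount (bigD1 (Ordinal im)) //= nz big1 // => j /= ji.
case: (eqVneq (r j c) 0) => [//|nzj]; exfalso.
have ij : i != j by apply: contra ji => /eqP e; apply/eqP/val_inj.
have [aij _] := share H im (ltn_ord j) ij nz nzj.
case: H => [_ _ Hs _ _]; rewrite Hs in aij.
by move: nzj; rewrite Hu ?eqxx.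
Qed.

Lemma supp2 N m r adj (i : nat) : Hyps m r adj -> (i < m)%N ->
  (\sum_(c < N) (r i c != 0))%N = 2.
Proof.
move=> [Hn _ _ _ _] im; have [a [b [ab pa pb S]]] := norm2_shape (Hn _ im).
rewrite (bigD1 a) //= (bigD1 b) /=; last by rewrite eq_sym.
rewrite big1; last by move=> c /andP[ca cb]; rewrite S ?eqxx.
by case: pa => ->; case: pb => ->.
Qed.

Definition EllHyp (m : nat) (adj : nat -> nat -> bool) (ell : nat -> nat) :=
  forall i, (i < m)%N -> ell i = 0%N \/
    (ell i = 1%N /\ exists u, [/\ (u < m)%N, adj u i &
        forall x, (x < m)%N -> adj x i -> x = u]) \/
    (ell i = 2%N /\ forall x, (x < m)%N -> ~~ adj x i).

Lemma ell_bound N m r adj ell (i : nat) : Hyps m r adj -> EllHyp m adj ell ->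
  (i < m)%N ->
  (ell i <= \sum_(c < N) ((r i c != 0) && (dcount m r c == 1%N)))%N.
Proof.
move=> H He im; have H' := H; case: H' => [Hn Hd Hs Hirr Htw].
have [a [b [ab pa pb S]]] := norm2_shape (Hn _ im).
have nz : forall z : int, pm1 z -> z != 0 by move=> z [] ->.
case: (He _ im) => [->//|[[-> [u [um aui Hu]]]|[-> Hiso]]].
- have [c [ci lc]] : exists c, r i c != 0 /\ r u c = 0.
    have [ua|] := eqVneq (r u a) 0; first by exists a; split => //; apply: nz.
    have [ub|] := eqVneq (r u b) 0; first by exists b; split => //; apply: nz.
    move=> nzb nza; exfalso.
    have [c' [c'a pua puc' Su]] := norm2_at (Hn _ um) nza.
    have bc' : b = c'.
      apply/eqP; apply: contraT => bc'; move: nzb; rewrite Su ?eqxx //.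
      by rewrite eq_sym.
    subst c'.
    have ui : i != u by apply/eqP => iu; move: (Hirr u); rewrite -{2}iu aui.
    apply: (twins H im um ui ab pa pb pua puc' S).
    by move=> e ea eb; apply: Su.
  have d1 : dcount m r c = 1%N.
    by apply: (leaf H im ci) => x xm axi; rewrite (Hu x xm axi).
  by rewrite (bigD1 c) //= ci d1 eqxx.
- have da : dcount m r a = 1%N.
    apply: (leaf H im (nz _ pa)) => x xm; by rewrite (negbTE (Hiso x xm)).
  have db : dcount m r b = 1%N.
    apply: (leaf H im (nz _ pb)) => x xm; by rewrite (negbTE (Hiso x xm)).
  rewrite (bigD1 a) //= (bigD1 b) /=; last by rewrite eq_sym.
  by rewrite nz // da nz // db.
Qed.

Lemma core_count N m (r : nat -> 'I_N -> int) adj ell : Hyps m r adj -> EllHyp m adj ell ->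
  (2 * m + \sum_(i < m) ell i <= 2 * N)%N.
Proof.
move=> H He; set d := dcount m r.
have S1 : (\sum_(c < N) d c = 2 * m)%N.
  rewrite /d /dcount exchange_big /=.
  rewrite (eq_bigr (fun _ => 2%N)); last by move=> i _; rewrite (supp2 H (ltn_ord i)).
  by rewrite sum_nat_const card_ord; lia.
have S2 : (\sum_(c < N) (d c == 1%N) =
    \sum_(i < m) \sum_(c < N) ((r i c != 0) && (d c == 1%N)))%N.
  rewrite [RHS]exchange_big /=; apply: eq_bigr => c _.
  case: (eqVneq (d c) 1%N) => [e|ne].
    rewrite [LHS]/= -[in LHS]e /d /dcount; apply: eq_bigr => i _; by rewrite andbT.
  by rewrite big1 // => i _; rewrite andbF.
have S3 : (\sum_(i < m) ell i <= \sum_(c < N) (d c == 1%N))%N.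
  by rewrite S2; apply: leq_sum => i _; exact: (ell_bound H He (ltn_ord i)).
have S4 : (\sum_(c < N) (d c + (d c == 1%N)) <= \sum_(c < N) 2)%N.
  apply: leq_sum => c _; have := dcount_le2 c H; rewrite -/d.
  by case: (d c) => [|[|[|n]]].
move: S4; rewrite big_split /= S1 sum_nat_const card_ord.
move: S3; set X := (\sum_(c < N) _)%N; set Y := (\sum_(i < m) _)%N. lia.
Qed.

Definition adjc (cs : seq (seq nat)) (i j : nat) : bool :=
  ((i.+1 == j) || (j.+1 == i)) &&
  (nth 0%N (chain_ids cs) i == nth 0%N (chain_ids cs) j).

Lemma embed_bound cs N m ell :
  (m <= size (flatten cs))%N ->
  (forall i, (i < m)%N -> nth 0%N (flatten cs) i = 2%N) ->
  (forall i j, (i < m)%N -> (j < m)%N -> i != j -> ~~ adjc cs i j ->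
     exists x, [&& (x < m)%N, x != i, x != j & adjc cs x i != adjc cs x j]) ->
  EllHyp m (adjc cs) ell ->
  embeds_into_negZ (gram_sum cs) N -> (2 * m + \sum_(i < m) ell i <= 2 * N)%N.
Proof.
move=> mn H2 Htw He [A [_ HA]].
set n := size (flatten cs) in A HA mn.
pose r (i : nat) : 'I_N -> int :=
  if insub i is Some o then (fun c => A o c) else (fun _ => 0).
have rE : forall i (Hi : (i < n)%N), r i = (fun c => A (Ordinal Hi) c).
  by move=> i Hi; rewrite /r insubT.
have Hdot : forall i j (Hi : (i < n)%N) (Hj : (j < n)%N),
    dotv (r i) (r j) = - gram_sum cs (Ordinal Hi) (Ordinal Hj).
  move=> i j Hi Hj; rewrite (rE _ Hi) (rE _ Hj) /dotv.
  have := congr1 (fun M : 'M[int]_n => M (Ordinal Hi) (Ordinal Hj)) HA.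
  rewrite !mxE => <-; apply: eq_bigr => c _; by rewrite mxE.
apply: (core_count (r := r) (adj := adjc cs)) => //; split.
- move=> i im; have Hi : (i < n)%N by apply: leq_trans mn.
  by rewrite (Hdot _ _ Hi Hi) mxE eqxx /= H2 // opprK.
- move=> i j im jm ij; have Hi : (i < n)%N by apply: leq_trans mn.
  have Hj : (j < n)%N by apply: leq_trans mn.
  rewrite (Hdot _ _ Hi Hj) mxE /=.
  have -> : (Ordinal Hi == Ordinal Hj) = false by apply/negbTE; rewrite -val_eqE.
  by rewrite /adjc; case: ifP => _; rewrite ?oppr0.
- by move=> i j; rewrite /adjc orbC; congr (_ && _); exact: eq_sym.
- by move=> i; rewrite /adjc !eqn_leq !ltnn.
- exact: Htw.
Qed.

Lemma hjval_cons a s : s != [::] -> hjval (a :: s) = a%:R - (hjval s)^-1.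
Proof. by case: s. Qed.

Lemma hjval_twos (k j : nat) :
  hjval (nseq j 2%N ++ [:: (k + 2)%N; 9%N]) =
  ((9 * k + 17 + j * (9 * k + 8))%N%:R / (9 + j * (9 * k + 8))%N%:R : rat).
Proof.
elim: j => [|j IH].
  rewrite mul0n !addn0 cat0s hjval_cons // (_ : hjval [:: 9%N] = 9) // !natrD.
  by field.
have nz1 : ((9 + j * (9 * k + 8))%N%:R : rat) != 0 by rewrite pnatr_eq0; lia.
have nz2 : ((9 * k + 17 + j * (9 * k + 8))%N%:R : rat) != 0 by rewrite pnatr_eq0; lia.
have nz3 : ((9 + j.+1 * (9 * k + 8))%N%:R : rat) != 0 by rewrite pnatr_eq0; lia.
rewrite -[nseq j.+1 2%N]/(2%N :: nseq j 2%N) cat_cons hjval_cons; last by case: j {IH nz1 nz2 nz3}.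
rewrite IH invf_div.
rewrite (_ : (9 + j.+1 * (9 * k + 8))%N = (9 * k + 17 + j * (9 * k + 8))%N); last by lia.
apply: (@mulIf _ ((9 * k + 17 + j * (9 * k + 8))%N%:R)) => //.
rewrite mulfVK // mulrBl divfK // -natrM -natrB; last by nia.
by congr (_ %:R); nia.
Qed.

Lemma hjs1 : hjexp 2 (2 - 1) = [:: 2%N]. Proof. by []. Qed.
Lemma hjs2 : hjexp 3 (3 - 2) = [:: 3%N]. Proof. by []. Qed.
Lemma hjs3 : hjexp 5 (5 - 4) = [:: 5%N]. Proof. by []. Qed.
Lemma hjc1 : hjexp 2 1 = [:: 2%N]. Proof. by []. Qed.
Lemma hjc2 : hjexp 3 2 = [:: 2%N; 2%N]. Proof. by []. Qed.
Lemma hjc3 : hjexp 5 4 = [:: 2%N; 2%N; 2%N; 2%N]. Proof. by []. Qed.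
Lemma qs1 : qinv 2 1 = 1%N. Proof. by []. Qed.
Lemma qs2 : qinv 3 2 = 2%N. Proof. by []. Qed.
Lemma qs3 : qinv 5 4 = 4%N. Proof. by []. Qed.

Opaque hjexp qinv.

Lemma K2_main (k : nat) : (12 <= k)%N ->
  K2 [:: (2, 1); (3, 2); (5, 4); (9 * k ^ 2 + 17 * k + 17, 9 * k ^ 2 + 8 * k + 9)]%N
  = (3 * k ^ 2 + 139 * k + 154)%:R / (15 * (9 * k ^ 2 + 17 * k + 17))%:R.
Proof.
move=> k12.
rewrite /K2 /Ltot /= hjs1 hjs2 hjs3 !big_cons big_nil /= qs1 qs2 qs3.
rewrite hj_dual // qinv_main //.
case: k k12 => [//|j] k12; rewrite subn1 /=.
rewrite !size_cat !size_nseq !sumn_cat !sumn_nseq /=.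
have nz : ((9 * j.+1 ^ 2 + 17 * j.+1 + 17)%N%:R : rat) != 0 by rewrite pnatr_eq0.
have nz' : ((15 * (9 * j.+1 ^ 2 + 17 * j.+1 + 17))%N%:R : rat) != 0 by rewrite pnatr_eq0.
move: nz nz'; rewrite !(natrD, natrM, natrX) => nz nz'.
field. all: try exact nz. all: try exact nz'.
have j0 : 0 <= (j%:R : rat) := ler0n _ _. apply: lt0r_neq0; nra.
Qed.

Lemma eorb_main (k : nat) :
  3 * eorb [:: (2, 1); (3, 2); (5, 4); (9 * k ^ 2 + 17 * k + 17, 9 * k ^ 2 + 8 * k + 9)]%N
  = 1 / 10 + 3 / (9 * k ^ 2 + 17 * k + 17)%N%:R.
Proof.
have nz : ((9 * k ^ 2 + 17 * k + 17)%N%:R : rat) != 0 by rewrite pnatr_eq0; lia.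
rewrite /eorb !big_cons big_nil /=.
move: nz; set P := (_ %:R : rat) => nz.
field; apply: lt0r_neq0; have := ler0n rat k; nra.
Qed.

Lemma ineq_main (k : nat) : (12 <= k)%N ->
  (3 * k ^ 2 + 139 * k + 154)%N%:R / (15 * (9 * k ^ 2 + 17 * k + 17))%N%:R
  < 1 / 10 + 3 / (9 * k ^ 2 + 17 * k + 17)%N%:R :> rat.
Proof.
move=> k12.
have k12' : 12 <= (k%:R : rat) by rewrite (ler_nat rat 12 k).
rewrite !(natrD, natrM, natrX).
set x := (k%:R : rat).
have P : 0 < 9 * x ^+ 2 + 17 * x + 17 by nra.
rewrite (_ : 1 / 10 + 3 / (9 * x ^+ 2 + 17 * x + 17) =
   (3 * (9 * x ^+ 2 + 17 * x + 17 + 30)) / (30 * (9 * x ^+ 2 + 17 * x + 17))); last first.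
  by field; rewrite lt0r_neq0.
rewrite (_ : (3 * x ^+ 2 + 139 * x + 154) / (15 * (9 * x ^+ 2 + 17 * x + 17)) =
   (2 * (3 * x ^+ 2 + 139 * x + 154)) / (30 * (9 * x ^+ 2 + 17 * x + 17))); last first.
  by field; rewrite lt0r_neq0.
rewrite ltr_pM2r ?invr_gt0; last by nra.
nra.
Qed.

Theorem mainTheorem3 (k : nat) :
  (12 <= k)%N -> (k %% 3 != 2)%N ->
  let p4 := (9 * k ^ 2 + 17 * k + 17)%N in
  let q4 := (9 * k ^ 2 + 8 * k + 9)%N in
  let T := [:: (2, 1); (3, 2); (5, 4); (p4, q4)]%N in
  (p4%:R / q4%:R : rat) = hjval (nseq k 2%N ++ [:: (2 + k)%N; 9%N]) /\
  qinv p4 q4 = (k ^ 2 + 2 * k + 2)%N /\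
  gcdn p4 30 = 1%N /\
  K2 T = (3 * k ^ 2 + 139 * k + 154)%:R / (15 * p4)%:R /\
  (0 < K2 T /\ K2 T < 3 * eorb T) /\
  3 * eorb T = 1 / 10 + 3 / p4%:R /\
  ~ embeds_into_negZ (gram_sum (chains T)) (k + 10).
Proof.
move=> k12 k3 p4 q4 T.
have K2E : K2 T = (3 * k ^ 2 + 139 * k + 154)%:R / (15 * p4)%:R by exact: K2_main.
have EE : 3 * eorb T = 1 / 10 + 3 / p4%:R by exact: eorb_main.
split.
  rewrite (addnC 2 k) hjval_twos /p4 /q4.
  rewrite (_ : (9 * k + 17 + k * (9 * k + 8))%N = (9 * k ^ 2 + 17 * k + 17)%N); last by ring.
  by rewrite (_ : (9 + k * (9 * k + 8))%N = (9 * k ^ 2 + 8 * k + 9)%N); last by ring.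
split; first exact: qinv_main.
split; first exact: gcd_main.
split; first exact: K2E.
split.
  rewrite K2E EE; split; last exact: ineq_main.
  by rewrite divr_gt0 // ltr0n /p4; lia.
split; first exact: EE.
move=> Hemb.
have Hcs : chains T = [:: [:: 2]; [:: 2; 2]; [:: 2; 2; 2; 2];
                         nseq k 2 ++ [:: k + 2; 9]]%N.
  by rewrite /chains /T /= hjc1 hjc2 hjc3 /p4 /q4 hj_main.
have Hfl : flatten (chains T) = (nseq (k + 7) 2 ++ [:: k + 2; 9])%N.
  by rewrite Hcs /= (addnC k 7) nseqD /= cats0.
have Hid : chain_ids (chains T) = ([:: 0; 1; 1; 2; 2; 2; 2] ++ nseq (k + 2) 3)%N.
  by rewrite Hcs /chain_ids /= size_cat size_nseq /= cats0 addn2.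
have Hadj : forall i j, (i < k + 9)%N -> (j < k + 9)%N -> adjc (chains T) i j = adjL i j.
  by move=> i j im jm; rewrite /adjc Hid !ids_nth.
have Hb := @embed_bound (chains T) (k + 10) (k + 7) (ellf k).
suff : (2 * (k + 7) + 8 <= 2 * (k + 10))%N by lia.
rewrite -{1}(ell_sum k12); apply: Hb => //.
- by rewrite Hfl size_cat size_nseq; lia.
- by move=> i im; rewrite Hfl flat_nth.
- move=> i j im jm ij; rewrite Hadj //; try lia.
  move=> na; have [x /and4P[a b c d]] := notwins_L k12 im jm ij na.
  by exists x; rewrite a b c !Hadj //; lia.
- move=> i im; case: (ellhyp_L k12 im) => [h|[[h [u [um au Hu]]]|[h Hx]]].
  + by left.
  + right; left; split => //; exists u; split => //.
      by rewrite Hadj //; lia.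
    by move=> x xm; rewrite Hadj //; [apply: Hu|lia|lia].
  + right; right; split => // x xm; rewrite Hadj //; [exact: Hx|lia|lia].
Qed.
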